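(* Let $t_1,\dots,t_d$ be positive integers with $t_i\le n_i$ for all $i$ and $t_1=t_2\cdots t_d$, let $H$ be the stabilizer of $T=\sum_{\beta_2,\dots,\beta_d} e_1^{\iota(\beta_2,\dots,\beta_d)}\otimes e_2^{\beta_2}\otimes\cdots\otimes e_d^{\beta_d}$, so $\Lambda_{t_1\dots t_d}=G/H$. Then $G/H$ is reductive if and only if $n_i=t_i$ for all $i=1,\dots,d$. Moreover, in that case the orthogonal complement $\mathfrak{m}$ of $\mathfrak{h}$ in $\mathfrak{g}$ (with respect to $\langle Z,Z'\rangle=\sum_i\mathrm{tr}(Z_iZ_i'^{\mathsf T})$) satisfies $h\mathfrak{m}h^{-1}\subset\mathfrak{m}$ for all $h\in H$.
   Context: Fix integers $d\ge 3$ and $n_1,\dots,n_d\ge 2$. $V=\mathbb{R}^{n_1}\otimes\cdots\otimes\mathbb{R}^{n_d}$, and $G=\mathrm{GL}(n_1)\times\cdots\times\mathrm{GL}(n_d)$ acts on $V$ by $(g_1,\dots,g_d)\cdot(v_1\otimes\cdots\otimes v_d)=(g_1v_1)\otimes\cdots\otimes(g_dv_d)$, extended linearly. $e_i^1,\dots,e_i^{n_i}$ is the standard basis of $\mathbb{R}^{n_i}$. $\iota:[t_2]\times\cdots\times[t_d]\to[t_1]$ is the lexicographic bijection with $\beta_2$ most significant. $\mathfrak{g}=\mathfrak{gl}(n_1)\times\cdots\times\mathfrak{gl}(n_d)$ is the Lie algebra of $G$, $\mathfrak{h}$ the Lie algebra of $H$, and $H$ acts on $\mathfrak{g}$ by $hZh^{-1}=(h_iZ_ih_i^{-1})_i$.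 A homogeneous space $G/H$ is called reductive if there exists a linear subspace $\mathfrak{p}\subset\mathfrak{g}$ with $\mathfrak{p}\oplus\mathfrak{h}=\mathfrak{g}$ and $h\mathfrak{p}h^{-1}\subset\mathfrak{p}$ for all $h\in H$. *)

(* Defs.v *)
From HB Require Import structures.
From mathcomp Require Import all_boot all_order all_algebra.
From mathcomp Require Import reals.
Set Implicit Arguments. Unset Strict Implicit. Unset Printing Implicit Defensive.
Import Order.TTheory GRing.Theory Num.Theory.
Local Open Scope ring_scope.

Section TensorDefs.
Variables (R : realType) (d : nat) (n : 'I_d -> nat).

Definition midx := {dffun forall i : 'I_d, 'I_(n i)}.

(* V = R^{n_1} (x) ... (x) R^{n_d}, as coordinate functions *)
Definition tensor := midx -> R.

(* elements of gl(n_1) x ... x gl(n_d) (also carrier of G) *)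
Definition gltuple := forall i : 'I_d, 'M[R]_(n i).

Definition inG (g : gltuple) : Prop := forall i, g i \in unitmx.

(* (g_1,...,g_d) . T, extended linearly from pure tensors *)
Definition act (g : gltuple) (T : tensor) : tensor :=
  fun a => \sum_(b : midx) (\prod_(i < d) g i (a i) (b i)) * T b.

(* derivative at 0 of t |-> (1 + tZ) . T : the infinitesimal action of g *)
Definition dact (Z : gltuple) (T : tensor) : tensor :=
  fun a => \sum_(b : midx)
     (\sum_(i < d) Z i (a i) (b i) *
        \prod_(j < d | j != i) ((a j == b j :> nat)%:R : R)) * T b.

Definition gl0 : gltuple := fun i => 0.
Definition gladd (Z Z' : gltuple) : gltuple := fun i => Z i + Z' i.
Definition glscale (c : R) (Z : gltuple) : gltuple := fun i => c *: Z i.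
Definition glconj (h Z : gltuple) : gltuple := fun i => h i *m Z i *m invmx (h i).
Definition gldot (Z Z' : gltuple) : R := \sum_(i < d) \tr (Z i *m (Z' i)^T).

Definition subspace (P : gltuple -> Prop) : Prop :=
  [/\ P gl0, (forall Z Z', P Z -> P Z' -> P (gladd Z Z'))
    & (forall c Z, P Z -> P (glscale c Z))].

Definition direct_sum_full (P Q : gltuple -> Prop) : Prop :=
  (forall Z, P Z -> Q Z -> Z = gl0) /\
  (forall Z, exists X Y, P X /\ Q Y /\ Z = gladd X Y).

Variable t : 'I_d -> nat.

(* lexicographic bijection iota, beta_2 most significant (0-based indices:
   coordinate 0 is the first factor) *)
Definition iota_lex (a : midx) : nat :=
  (\sum_(i < d | (0 < val i)%N) val (a i) * \prod_(j < d | (val i < val j)%N) t j)%N.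

(* T = sum_beta e_1^{iota(beta)} (x) e_2^{beta_2} (x) ... (x) e_d^{beta_d} *)
Definition Tt : tensor := fun a =>
  (([forall i : 'I_d, (0 < val i)%N ==> (val (a i) < t i)%N] &&
    [forall i : 'I_d, (val i == 0%N) ==> (val (a i) == iota_lex a)]) %:R).

Definition inH (h : gltuple) : Prop := inG h /\ forall a, act h Tt a = Tt a.

(* Lie algebra of H = annihilator of T under the infinitesimal action *)
Definition in_h (Z : gltuple) : Prop := forall a, dact Z Tt a = 0.

Definition in_m (Z : gltuple) : Prop := forall K, in_h K -> gldot Z K = 0.

Definition reductive : Prop :=
  exists P : gltuple -> Prop,
    [/\ subspace P, direct_sum_full P in_h
      & forall h, inH h -> forall Z, P Z -> P (glconj h Z)].

End TensorDefs.

(* Main.v *)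
Require Import Defs.
From HB Require Import structures.
From mathcomp Require Import all_boot all_order all_algebra.
From mathcomp Require Import reals.
From mathcomp Require Import ring zify.
From Stdlib Require Import FunctionalExtensionality.
Set Implicit Arguments. Unset Strict Implicit. Unset Printing Implicit Defensive.
Import Order.TTheory GRing.Theory Num.Theory.
Local Open Scope ring_scope.

Lemma Dlem (R : comPzRingType) (d : nat) (n : 'I_d -> nat)
  (F : forall i : 'I_d, 'I_(n i) -> R) :
  \sum_(b : {dffun forall i : 'I_d, 'I_(n i)}) \prod_(i < d) F i (b i) =
  \prod_(i < d) \sum_(c : 'I_(n i)) F i c.
Proof.
pose T_ := fun i : 'I_d => ('I_(n i) : finType).
pose P_ := fun i : 'I_d => [ffun c : T_ i => F i c].
rewrite (reindex (@dffun_of_fprod _ T_)); last first.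
  by apply: onW_bij; apply: dffun_of_fprod_bij.
transitivity (\sum_(t : fprod T_) \prod_(i in 'I_d) P_ i (t i)).
  by apply: eq_bigr => t _; apply: eq_bigr => i _; rewrite !ffunE.
transitivity (\sum_(g in family (tagged_with T_)) \prod_(i : 'I_d) untag 0 (P_ i) (g i)).
  exact: (@big_fprod R 0 1 *%R +%R _ T_ P_).
transitivity (\prod_(i : 'I_d) \sum_(j in tagged_with T_ i) untag 0 (P_ i) j).
  symmetry. exact: (@bigA_distr_big_dep R 0 1 *%R +%R _ _ (fun i => mem (tagged_with T_ i)) (fun i => untag 0 (P_ i))).
apply: eq_bigr => i _.
transitivity (\sum_(c : T_ i) P_ i c).
  symmetry; exact: (@big_tag R 0 +%R _ T_ P_ i).
by apply: eq_bigr => c _; rewrite ffunE.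
Qed.

Section Gen.
Variables (R : realType) (d : nat) (n : 'I_d -> nat).

Definition upd (a : midx n) (k : 'I_d) (v : nat) : midx n :=
  [ffun j => if j == k then insubd (a j) v else a j].

Lemma updE a k v j : val (upd a k v j) =
  if j == k then (if (v < n j)%N then v else val (a j)) else val (a j).
Proof.
rewrite /upd ffunE; case: eqP => // _; rewrite val_insubd; done.
Qed.

Lemma upd_other a k v j : j != k -> upd a k v j = a j.
Proof. by move=> /negbTE hj; rewrite /upd ffunE hj. Qed.

Lemma upd_same a k v : (v < n k)%N -> val (upd a k v k) = v.
Proof. by move=> hv; rewrite updE eqxx hv. Qed.

Lemma upd_id a k : upd a k (a k) = a.
Proof.
apply/ffunP => j; apply/val_inj; rewrite updE.
by case: eqP => // ->; rewrite ltn_ord.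
Qed.

Definition dl (x y : nat) : R := ((x == y)%:R).

Lemma sum_delta (I : finType) (x : I) (F : I -> R) :
  \sum_(b : I) (b == x)%:R * F b = F x.
Proof.
rewrite (bigD1 x) //= eqxx mul1r big1 ?addr0 // => b /negbTE ->.
by rewrite mul0r.
Qed.

Lemma SL (a : midx n) (i : 'I_d) (F : midx n -> R) :
  \sum_(b : midx n) (\prod_(j < d | j != i) dl (a j) (b j)) * F b =
  \sum_(c : 'I_(n i)) F (upd a i c).
Proof.
transitivity (\sum_(c : 'I_(n i)) \sum_(b : midx n) (b == upd a i c)%:R * F b).
  2: by apply: eq_bigr => c _; rewrite sum_delta.
rewrite exchange_big /=; apply: eq_bigr => b _.
rewrite -mulr_suml; congr (_ * _).
case: (boolP [forall j, (j != i) ==> (val (a j) == val (b j))]) => H.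
  rewrite big1; last first.
    by move=> j hj; rewrite /dl; move/forallP: H => /(_ j); rewrite hj /= => ->.
  rewrite (bigD1 (b i)) //= big1.
    rewrite addr0; suff -> : b == upd a i (b i) by [].
    apply/eqP/ffunP => j; apply/val_inj; rewrite updE.
    case: eqP => [->|/eqP hj]; first by rewrite ltn_ord.
    by move/forallP: H => /(_ j); rewrite hj /= => /eqP.
  move=> c hc; case: eqP => // hb; move: hc; rewrite hb.
  by rewrite -(inj_eq val_inj) upd_same ?ltn_ord // eqxx.
move: H => /forallPn [j]; rewrite negb_imply => /andP [hj hab].
rewrite (bigD1 j) //= /dl (negbTE hab) mul0r.
rewrite big1 // => c _; case: eqP => // hb.
by move: hab; rewrite hb upd_other // eqxx.
Qed.

Lemma DF (Z : gltuple R n) (S : tensor R n) a :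
  dact Z S a = \sum_(i < d) \sum_(c : 'I_(n i)) Z i (a i) c * S (upd a i c).
Proof.
rewrite /dact.
under eq_bigr do rewrite mulr_suml.
rewrite exchange_big /=; apply: eq_bigr => i _.
transitivity (\sum_(c : 'I_(n i)) Z i (a i) (upd a i c i) * S (upd a i c)).
  rewrite -(SL a i (fun b => Z i (a i) (b i) * S b)).
  by apply: eq_bigr => b _; rewrite /dl mulrCA mulrA.
apply: eq_bigr => c _.
have -> : upd a i c i = c by apply/val_inj; rewrite upd_same ?ltn_ord.
by [].
Qed.


Lemma upd_sameO a k (v : 'I_(n k)) : upd a k v k = v.
Proof. by apply/val_inj; rewrite upd_same ?ltn_ord. Qed.

Lemma sum_dl_r (m : nat) (F : 'I_m -> R) (c : 'I_m) :
  \sum_(x : 'I_m) F x * dl x c = F c.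
Proof.
rewrite (bigD1 c) //= /dl eqxx mulr1 big1 ?addr0 // => x hx.
by rewrite (_ : (x == c :> nat) = false) ?mulr0 // (inj_eq val_inj) (negbTE hx).
Qed.

Lemma dact_conj (g K : gltuple R n) (S : tensor R n) a :
  (forall i, g i \in unitmx) ->
  dact (glconj g K) (act g S) a = act g (dact K S) a.
Proof.
move=> hg.
pose Phi := \sum_(c : midx n) S c * \sum_(i < d)
   ((g i *m K i) (a i) (c i) * \prod_(l < d | l != i) g l (a l) (c l)).
transitivity Phi.
  rewrite DF /Phi.
  under [RHS]eq_bigr do rewrite mulr_sumr.
  rewrite exchange_big /=; apply: eq_bigr => i _.
  rewrite /act.
  under eq_bigr do rewrite mulr_sumr.
  rewrite exchange_big /=; apply: eq_bigr => c _.
  transitivity (S c * \sum_(x : 'I_(n i)) glconj g K i (a i) x * g i x (c i) *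
      \prod_(l < d | l != i) g l (a l) (c l)).
    rewrite mulr_sumr; apply: eq_bigr => x _.
    rewrite (bigD1 i) //= upd_sameO.
    rewrite (eq_bigr (fun l => g l (a l) (c l))); last first.
      by move=> l hl; rewrite upd_other.
    by ring.
  congr (_ * _); rewrite -mulr_suml; congr (_ * _).
  have -> : (g i *m K i) = glconj g K i *m g i by rewrite /glconj mulmxKV.
  by rewrite mxE.
rewrite /act /Phi.
under [RHS]eq_bigr do rewrite DF.
under [LHS]eq_bigr do rewrite mulr_sumr.
rewrite [LHS]exchange_big /=.
under [RHS]eq_bigr do rewrite mulr_sumr.
rewrite [RHS]exchange_big /=; apply: eq_bigr => i _.
transitivity (\sum_(b : midx n) \sum_(c : midx n) S c *
   ((\prod_(l < d) g l (a l) (b l)) * K i (b i) (c i) *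
     \prod_(l < d | l != i) dl (b l) (c l))).
  2: { apply: eq_bigr => b _.
       rewrite mulr_sumr.
       transitivity (\sum_(y : 'I_(n i)) (fun c : midx n => (\prod_(l < d) g l (a l) (b l)) * (K i (b i) (c i) * S c)) (upd b i y)).
         rewrite -(SL b i (fun c => (\prod_(l < d) g l (a l) (b l)) * (K i (b i) (c i) * S c))).
         apply: eq_bigr => c _; rewrite /dl; ring.
       by apply: eq_bigr => y _; rewrite /= upd_sameO. }
rewrite exchange_big /=; apply: eq_bigr => c _.
rewrite -mulr_sumr; congr (_ * _).
pose F := fun (l : 'I_d) (x : 'I_(n l)) => g l (a l) x *
   (if l == i then K l x (c l) else dl x (c l)).
transitivity (\sum_(b : midx n) \prod_(l < d) F l (b l)).
  2: { apply: eq_bigr => b _.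
       rewrite big_split /= -mulrA; congr (_ * _).
       rewrite (bigD1 i) //= eqxx; congr (_ * _).
       by apply: eq_bigr => l /negbTE ->. }
rewrite Dlem [RHS](bigD1 i) //=.
congr (_ * _).
  rewrite mxE; apply: eq_bigr => x _; by rewrite /F eqxx.
apply: eq_bigr => l hl; rewrite /F (negbTE hl).
by rewrite sum_dl_r.
Qed.

End Gen.

Section Iota.
Variables (d : nat) (n t : 'I_d -> nat).

Definition Qs (m : nat) : nat := (\prod_(j < d | (m <= j)%N) t j)%N.
Definition Ss (a : midx n) (m : nat) : nat :=
  (\sum_(i < d | (0 < i)%N && (m <= i)%N) val (a i) * \prod_(j < d | (i < j)%N) t j)%N.

Lemma Qs_split m (hm : (m < d)%N) : Qs m = (t (Ordinal hm) * Qs m.+1)%N.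
Proof.
rewrite /Qs (bigD1 (Ordinal hm)) //=; congr (_ * _)%N.
apply: eq_bigl => j; rewrite -(inj_eq val_inj) /=.
by case: (ltngtP m j).
Qed.

Lemma Ss_split a m (hm0 : (0 < m)%N) (hm : (m < d)%N) :
  Ss a m = (val (a (Ordinal hm)) * Qs m.+1 + Ss a m.+1)%N.
Proof.
rewrite /Ss (bigD1 (Ordinal hm)) /=; last by rewrite hm0 leqnn.
congr (_ + _)%N.
apply: eq_bigl => j; rewrite -(inj_eq val_inj) /=.
case: (ltngtP m j) => //= [hmj|hmj|<-]; try lia.
Qed.

Lemma Ss_end a m : (d <= m)%N -> Ss a m = 0%N.
Proof.
move=> hm; rewrite /Ss big_pred0 // => i.
by rewrite (leqNgt m i) (leq_trans (ltn_ord i) hm) andbF.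
Qed.

Lemma Qs_end m : (d <= m)%N -> Qs m = 1%N.
Proof.
move=> hm; rewrite /Qs big_pred0 // => i.
by rewrite (leqNgt m i) (leq_trans (ltn_ord i) hm).
Qed.

Lemma Qs_pos m : (forall i, 0 < t i)%N -> (0 < Qs m)%N.
Proof. by move=> ht; rewrite /Qs prodn_gt0. Qed.

Lemma Ss_bound (a : midx n) m : (0 < m)%N -> (forall i : 'I_d, (0 < i)%N -> val (a i) < t i)%N ->
  (Ss a m < Qs m)%N.
Proof.
move=> hm0 ha.
have [k hk] : exists k, (d - m <= k)%N by exists (d - m)%N.
elim: k m hm0 hk => [|k IH] m hm0 hk.
  by rewrite Ss_end ?Qs_end //; lia.
case: (ltnP m d) => hmd; last by rewrite Ss_end ?Qs_end.
rewrite (Ss_split a hm0 hmd) (Qs_split hmd).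
have := IH m.+1 isT ltac:(lia).
have := ha (Ordinal hmd) hm0.
move: (val (a (Ordinal hmd))) (Ss a m.+1) (Qs m.+1) (t (Ordinal hmd)) => x s q tt hx hs.
apply: (@leq_trans (x * q + q)%N); first lia.
by rewrite addnC -mulSn leq_mul2r hx orbT.
Qed.

Lemma divmod_uniq (q1 q2 r1 r2 Q : nat) : (r1 < Q)%N -> (r2 < Q)%N ->
  (q1 * Q + r1 = q2 * Q + r2)%N -> q1 = q2 /\ r1 = r2.
Proof.
move=> h1 h2 e.
have hQ : (0 < Q)%N by apply: leq_ltn_trans h1.
have e1 : ((q1 * Q + r1) %/ Q = q1)%N by rewrite divnMDl // divn_small // addn0.
have e2 : ((q2 * Q + r2) %/ Q = q2)%N by rewrite divnMDl // divn_small // addn0.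
have eq : q1 = q2 by rewrite -e1 -e2 e.
split; first exact: eq. by move: e; rewrite eq => /eqP; rewrite eqn_add2l => /eqP.
Qed.

Lemma Ss_inj (a b : midx n) m : (0 < m)%N -> (forall i, 0 < t i)%N ->
  (forall i : 'I_d, (0 < i)%N -> val (a i) < t i)%N ->
  (forall i : 'I_d, (0 < i)%N -> val (b i) < t i)%N ->
  Ss a m = Ss b m -> forall i : 'I_d, (m <= i)%N -> val (a i) = val (b i).
Proof.
move=> hm0 ht ha hb.
have [k hk] : exists k, (d - m <= k)%N by exists (d - m)%N.
elim: k m hm0 hk => [|k IH] m hm0 hk.
  by move=> _ i hi; have := ltn_ord i; lia.
case: (ltnP m d) => hmd; last first.
  by move=> _ i hi; have := ltn_ord i; lia.
rewrite (Ss_split a hm0 hmd) (Ss_split b hm0 hmd) => e.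
have [e1 e2] := divmod_uniq (Ss_bound (isT : (0 < m.+1)%N) ha) (Ss_bound (isT : (0 < m.+1)%N) hb) e.
move=> i hi; case: (ltngtP m i) => hmi; last first.
- by have -> : i = Ordinal hmd by apply/val_inj.
- lia.
- by apply: (IH m.+1 isT ltac:(lia) e2 i hmi).
Qed.

Lemma Ss_surj m : (0 < m)%N -> (forall i, 0 < t i)%N -> (forall i, t i <= n i)%N ->
  forall y, (y < Qs m)%N -> forall a : midx n, exists b : midx n,
    (forall i : 'I_d, (i < m)%N -> b i = a i) /\ Ss b m = y.
Proof.
move=> hm0 ht htn.
have [k hk] : exists k, (d - m <= k)%N by exists (d - m)%N.
elim: k m hm0 hk => [|k IH] m hm0 hk.
  move=> y; rewrite Qs_end; last by lia.
  move=> hy a; exists a; split => //; rewrite Ss_end; lia.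
case: (ltnP m d) => hmd; last first.
  move=> y; rewrite Qs_end // => hy a; exists a; split => //; rewrite Ss_end; lia.
move=> y; rewrite (Qs_split hmd) => hy a.
set Q := Qs m.+1 in hy *.
have hQ : (0 < Q)%N by apply: Qs_pos.
have hq : (y %/ Q < t (Ordinal hmd))%N by rewrite ltn_divLR.
have [b [hb1 hb2]] := IH m.+1 isT ltac:(lia) (y %% Q)%N (ltn_pmod _ hQ)
   (upd a (Ordinal hmd) (y %/ Q)%N).
exists b; split.
  move=> i hi; rewrite hb1; last by lia.
  by apply: upd_other; rewrite -(inj_eq val_inj) /=; lia.
rewrite (Ss_split b hm0 hmd) hb2 hb1 //= upd_same; last first.
  by apply: (leq_trans hq).
by rewrite [in RHS](divn_eq y Q).
Qed.
End Iota.

Section MxLemmas.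
Variables (R : comUnitRingType) (m : nat).
Implicit Types (E X : 'M[R]_m).

Lemma delta_sandwich (p q : 'I_m) X :
  delta_mx p q *m X *m delta_mx p q = X q p *: delta_mx p q.
Proof.
apply/matrixP => i j; rewrite !mxE.
rewrite (bigD1 p) //= big1 ?addr0; last first.
  by move=> c /negbTE hc; rewrite !mxE hc /= mulr0.
rewrite !mxE (bigD1 q) //= big1 ?addr0; last first.
  by move=> c /negbTE hc; rewrite !mxE hc andbF mul0r.
rewrite !mxE !eqxx !andbT.
by case: (i == p); case: (j == q); rewrite /= ?mul0r ?mulr0 ?mul1r ?mulr1.
Qed.

Lemma unip_mul E c : E *m E = 0 -> (1%:M + c *: E) *m (1%:M - c *: E) = 1%:M.
Proof.
move=> hE.
rewrite mulmxDl mul1mx mulmxBr mulmx1 -scalemxAl -scalemxAr scalerA hE scaler0.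
by rewrite subr0 subrK.
Qed.

Lemma unip_inv E c : E *m E = 0 -> invmx (1%:M + c *: E) = 1%:M - c *: E.
Proof.
move=> hE; have e := unip_mul c hE.
have [hu _] := mulmx1_unit e.
by rewrite -[RHS](mulKmx hu) e mulmx1.
Qed.

Lemma conj_expand E X c :
  (1%:M + c *: E) *m X *m (1%:M - c *: E) =
  X + c *: (E *m X) - c *: (X *m E) - (c * c) *: (E *m X *m E).
Proof.
rewrite mulmxDl mul1mx -scalemxAl mulmxBr mulmx1 mulmxDl -!scalemxAr -scalemxAl.
rewrite scalerA; set A := E *m X *m E.
by rewrite opprD addrA.
Qed.

End MxLemmas.

Section Main.
Variables (R : realType) (d : nat) (n t : 'I_d -> nat) (i0 : 'I_d).
Hypothesis hi0 : val i0 = 0%N.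
Hypothesis ht : forall i, (0 < t i)%N.
Hypothesis htn : forall i, (t i <= n i)%N.
Hypothesis ht0 : t i0 = (\prod_(j < d | (0 < val j)%N) t j)%N.
Local Notation TT := (@Tt R d n t).

Lemma n_pos j : (0 < n j)%N.
Proof. exact: leq_trans (ht j) (htn j). Qed.

Definition a0 : midx n := [ffun j => Ordinal (n_pos j)].

Lemma a0E j : val (a0 j) = 0%N.
Proof. by rewrite ffunE. Qed.

Lemma iota_Ss (a : midx n) : iota_lex t a = Ss t a 1.
Proof. by rewrite /iota_lex /Ss; apply: eq_bigl => i; rewrite andbb. Qed.

Lemma t0_Qs : t i0 = Qs t 1.
Proof. by rewrite ht0. Qed.

Lemma iota_lt (a : midx n) : (forall i : 'I_d, (0 < i)%N -> val (a i) < t i)%N ->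
  (iota_lex t a < t i0)%N.
Proof. by move=> ha; rewrite iota_Ss t0_Qs; apply: Ss_bound. Qed.

Lemma i0_uniq (i : 'I_d) : val i = 0%N -> i = i0.
Proof. by move=> h; apply/val_inj; rewrite h hi0. Qed.

Lemma Tt_zero (b : midx n) k : (t k <= val (b k))%N -> TT b = 0.
Proof.
move=> hk; rewrite /Tt.
case: (boolP [forall i : 'I_d, (0 < val i)%N ==> (val (b i) < t i)%N]) => H /=; last first.
  by [].
case: (posnP (val k)) => hk0; last first.
  by move/forallP: H => /(_ k); rewrite hk0 /= ltnNge hk.
have ek := i0_uniq hk0; subst k.
case: (boolP [forall i : 'I_d, (val i == 0%N) ==> (val (b i) == iota_lex t b)]) => H2 //=.
move/forallP: H2 => /(_ i0); rewrite hi0 eqxx /= => /eqP e.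
have := @iota_lt b (fun i hi => implyP (forallP H i) hi).
by rewrite -e ltnNge hk.
Qed.

Lemma conj_h (g K : gltuple R n) : inH t g -> in_h t K -> in_h t (glconj g K).
Proof.
move=> [hG hA] hK a.
have eT : act g TT = TT by apply: functional_extensionality => b; apply: hA.
rewrite -[X in dact _ X]eT dact_conj //.
by rewrite /act big1 // => b _; rewrite hK mulr0.
Qed.

Lemma gldot_conj (h Z K : gltuple R n) : inG h ->
  gldot (glconj h Z) K = gldot Z (glconj (fun i => (h i)^T) K).
Proof.
move=> hG; rewrite /gldot; apply: eq_bigr => i _; rewrite /glconj.
rewrite !trmx_mul trmxK trmx_inv trmxK.
rewrite mxtrace_mulC !mulmxA mxtrace_mulC !mulmxA.
by rewrite mxtrace_mulC !mulmxA.
Qed.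

Lemma val_upd_a0 k (c : 'I_(n k)) i :
  val (upd a0 k c i) = if i == k then val c else 0%N.
Proof.
case: (eqVneq i k) => [->|hi]; first by rewrite upd_sameO.
by rewrite upd_other // a0E.
Qed.

Lemma iota_upd_a0 k (c : 'I_(n k)) :
  iota_lex t (upd a0 k c) =
  if val k == 0%N then 0%N else (val c * \prod_(j < d | (val k < val j)%N) t j)%N.
Proof.
rewrite /iota_lex; case: (eqVneq (val k) 0%N) => hk.
  rewrite big1 // => i hi; rewrite val_upd_a0.
  case: eqP => [e|]; last by rewrite mul0n.
  by move: hi; rewrite e hk.
rewrite -lt0n in hk.
rewrite (bigD1 k) //= val_upd_a0 eqxx [X in (_ + X)%N]big1 ?addn0 // => i /andP [_ hi].
by rewrite val_upd_a0 (negbTE hi) mul0n.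
Qed.

Lemma Tt_gen (b : midx n) : (forall i : 'I_d, (0 < i)%N -> val (b i) < t i)%N ->
  TT b = (val (b i0) == iota_lex t b)%:R.
Proof.
move=> hb; rewrite /Tt.
have -> : [forall i : 'I_d, (0 < val i)%N ==> (val (b i) < t i)%N].
  by apply/forallP => i; apply/implyP => /hb.
congr (_%:R); congr (nat_of_bool _).
apply/forallP/eqP => [H|e i]; first by have := H i0; rewrite hi0 eqxx => /eqP.
by apply/implyP => /eqP /i0_uniq ->; apply/eqP.
Qed.

Lemma Tupd0 k (c : 'I_(n k)) : TT (upd a0 k c) = (val c == 0%N)%:R.
Proof.
case: (ltnP (val c) (t k)) => hc; last first.
  rewrite (Tt_zero (k := k)); last by rewrite upd_sameO.
  have h0 : (val c == 0%N) = false.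
    by apply/negbTE; rewrite -lt0n; exact: leq_trans (ht k) hc.
  by rewrite h0.
rewrite Tt_gen; last first.
  by move=> i _; rewrite val_upd_a0; case: eqP => [->|] //.
case: (eqVneq k i0) => [e|hk].
  subst k; rewrite iota_upd_a0 hi0 eqxx /= upd_sameO.
  by [].
have hk0 : val k != 0%N by apply: contra hk => /eqP /i0_uniq ->.
rewrite iota_upd_a0 (negbTE hk0) upd_other 1?eq_sym // a0E.
have hP : (\prod_(j < d | (val k < val j)%N) t j != 0)%N.
  by rewrite -lt0n prodn_gt0.
have E : ((val c * \prod_(j < d | (val k < val j)%N) t j) == 0)%N = (val c == 0)%N.
  by rewrite muln_eq0 (negbTE hP) orbF.
by rewrite E.
Qed.

Section NotEq.
Variables (k : 'I_d).
Hypothesis hk : (t k < n k)%N.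

Definition pk (l : 'I_d) : 'I_(n l) := a0 l.
Definition qk (l : 'I_d) : 'I_(n l) := insubd (a0 l) (t k).
Lemma qkE : val (qk k) = t k.
Proof. by rewrite /qk val_insubd hk. Qed.
Lemma pk_qk : pk k != qk k.
Proof. by rewrite -(inj_eq val_inj) qkE /pk a0E eq_sym -lt0n. Qed.

Definition Eg : gltuple R n := fun l => if l == k then delta_mx (pk l) (qk l) else 0.
Definition Yg : gltuple R n := fun l => if l == k then delta_mx (qk l) (pk l) else 0.
Definition ug (c : R) : gltuple R n := fun l => 1%:M + c *: Eg l.

Lemma Eg2 l : Eg l *m Eg l = 0.
Proof.
rewrite /Eg; case: eqP => [->|_]; last by rewrite mulmx0.
by rewrite mul_delta_mx_0 // eq_sym pk_qk.
Qed.

Lemma Eg_other l : l != k -> Eg l = 0.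
Proof. by rewrite /Eg => /negbTE ->. Qed.

Lemma ug_other c l : l != k -> ug c l = 1%:M.
Proof. by move=> hl; rewrite /ug Eg_other // scaler0 addr0. Qed.

Lemma ug_inH c : inH t (ug c).
Proof.
split.
  by move=> l; have [] := mulmx1_unit (unip_mul c (Eg2 l)).
move=> a; rewrite /act.
transitivity (\sum_(b : midx n) (\prod_(j < d | j != k) dl R (a j) (b j)) *
    (ug c k (a k) (b k) * TT b)).
  apply: eq_bigr => b _; rewrite (bigD1 k) //= mulrCA mulrA; congr (_ * _).
  congr (_ * _); apply: eq_bigr => j hj; rewrite ug_other // /dl mxE; by [].
rewrite SL.
under eq_bigr do rewrite upd_sameO.
rewrite /ug /Eg eqxx.
under eq_bigr do rewrite mxE mulrDl.
rewrite big_split /=.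
rewrite [X in X + _](_ : _ = TT (upd a k (a k))); last first.
  rewrite (bigD1 (a k)) //= mxE eqxx mul1r big1 ?addr0 // => x hx.
  by rewrite mxE eq_sym (negbTE hx) mul0r.
rewrite upd_id [X in _ + X]big1 ?addr0 // => x _.
rewrite !mxE; case: (eqVneq x (qk k)) => [->|hx].
  by rewrite (Tt_zero (k := k)) ?mulr0 // upd_sameO qkE.
by rewrite andbF mulr0 mul0r.
Qed.

Lemma Eg_in_h : in_h t Eg.
Proof.
move=> a; rewrite DF big1 // => i _; rewrite big1 // => c _.
case: (eqVneq i k) => [e|hi]; last by rewrite Eg_other // mxE mul0r.
subst i; rewrite /Eg eqxx mxE.
case: (eqVneq c (qk k)) => [->|hc].
  by rewrite (Tt_zero (k := k)) ?mulr0 // upd_sameO qkE.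
by rewrite andbF mul0r.
Qed.

Lemma h_entry (K : gltuple R n) : in_h t K -> K k (qk k) (pk k) = 0.
Proof.
move=> hK.
pose as_ := upd a0 k (qk k).
have := hK as_; rewrite DF (bigD1 k) //=.
rewrite [X in _ + X]big1 ?addr0; last first.
  move=> i hi; rewrite big1 // => c _.
  rewrite (Tt_zero (k := k)) ?mulr0 // upd_other 1?eq_sym //.
  by rewrite upd_sameO qkE.
rewrite upd_sameO.
rewrite (eq_bigr (fun c => K k (qk k) c * dl R c (pk k))); last first.
  move=> c _; congr (_ * _).
  have -> : upd as_ k c = upd a0 k c.
    apply/ffunP => j; case: (eqVneq j k) => [->|hj]; first by rewrite !upd_sameO.
    by rewrite !upd_other.
  by rewrite Tupd0 /dl /pk a0E.
by rewrite sum_dl_r.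
Qed.

Lemma not_reductive : ~ reductive R n t.
Proof.
move=> [P [[P0 PD PZ] [Pdir Pdec] Pinv]].
have [X [Kh [hX [hKh eY]]]] := Pdec Yg.
have hX1 : X k (qk k) (pk k) = 1.
  have := congr1 (fun Z : gltuple R n => Z k (qk k) (pk k)) eY.
  rewrite /= /gladd mxE (h_entry hKh) addr0 /Yg eqxx mxE !eqxx => <- //.
have Q1 := Pinv _ (ug_inH 1) _ hX.
have Q2 := Pinv _ (ug_inH (-1)) _ hX.
have HW := PZ (- 2^-1) _ (PD _ _ (PD _ _ Q1 Q2) (PZ (-2) _ hX)).
have eW : glscale (- 2^-1) (gladd (gladd (glconj (ug 1) X) (glconj (ug (-1)) X))
   (glscale (-2) X)) = Eg.
  apply: functional_extensionality_dep => l.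
  rewrite /glscale /gladd /glconj /ug !unip_inv ?Eg2 // !conj_expand.
  have -> : Eg l *m X l *m Eg l = Eg l.
    case: (eqVneq l k) => [->|hl]; last by rewrite Eg_other // mulmx0.
    by rewrite /Eg eqxx delta_sandwich hX1 scale1r.
  apply/matrixP => i j; rewrite !mxE.
  have h2 : (2 : R) != 0 by rewrite pnatr_eq0.
  field.
  done.
rewrite eW in HW.
have := Pdir _ HW Eg_in_h.
move=> /(congr1 (fun Z : gltuple R n => Z k (pk k) (qk k))).
by rewrite /Eg /gl0 eqxx !mxE !eqxx /= => /eqP; rewrite oner_eq0.
Qed.

End NotEq.

Section Eq.
Hypothesis hnt : forall i, n i = t i.

Lemma in_t (a : midx n) i : (val (a i) < t i)%N.
Proof. by rewrite -hnt ltn_ord. Qed.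

Lemma iota_ltn (a : midx n) : (iota_lex t a < n i0)%N.
Proof. by rewrite hnt; apply: iota_lt => i _; apply: in_t. Qed.

Lemma iota_tails (a b : midx n) : (forall i, i != i0 -> a i = b i) ->
  iota_lex t a = iota_lex t b.
Proof.
move=> h; rewrite /iota_lex; apply: eq_bigr => i hi; rewrite h //.
by apply/eqP => e; move: hi; rewrite e hi0.
Qed.

Lemma iota_inj (a b : midx n) : iota_lex t a = iota_lex t b ->
  forall i, i != i0 -> a i = b i.
Proof.
rewrite !iota_Ss => e i hi; apply/val_inj.
apply: (Ss_inj (m := 1) isT ht _ _ e) => //.
- by move=> j _; apply: in_t.
- by move=> j _; apply: in_t.
- by case: (posnP (val i)) => // h; move: hi; rewrite (i0_uniq h) eqxx.
Qed.

Lemma iota_surj y (x : 'I_(n i0)) : (y < n i0)%N ->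
  exists b : midx n, b i0 = x /\ iota_lex t b = y.
Proof.
move=> hy.
have [b [hb1 hb2]] := Ss_surj (m := 1) isT ht htn (y := y)
  ltac:(by rewrite -t0_Qs -hnt) (upd a0 i0 x).
exists b; split; last by rewrite iota_Ss.
by rewrite hb1 ?hi0 // upd_sameO.
Qed.

Lemma Tt_eq (a : midx n) : TT a = (val (a i0) == iota_lex t a)%:R.
Proof.
rewrite /Tt.
have -> : [forall i : 'I_d, (0 < val i)%N ==> (val (a i) < t i)%N].
  by apply/forallP => i; apply/implyP => _; apply: in_t.
congr (_%:R); congr (nat_of_bool _).
apply/forallP/eqP => [H|e i]; first by have := H i0; rewrite hi0 eqxx => /eqP.
by apply/implyP => /eqP /i0_uniq ->; apply/eqP.
Qed.

Definition sf (y : nat) : midx n :=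
  odflt a0 [pick b : midx n | (val (b i0) == y) && (iota_lex t b == y)].

Lemma sf_spec y : (y < n i0)%N -> val (sf y i0) = y /\ iota_lex t (sf y) = y.
Proof.
move=> hy; rewrite /sf; case: pickP => [b /andP [/eqP h1 /eqP h2] | H] //=.
have [b [hb1 hb2]] := iota_surj (Ordinal hy) hy.
by have := H b; rewrite hb1 hb2 /= !eqxx.
Qed.

Lemma sf_uniq (b : midx n) : val (b i0) = iota_lex t b -> b = sf (iota_lex t b).
Proof.
move=> e.
have [h1 h2] := sf_spec (iota_ltn b).
apply/ffunP => i; case: (eqVneq i i0) => [->|hi].
  by apply/val_inj; rewrite h1.
by apply: iota_inj hi; rewrite h2.
Qed.

Lemma sf_inj (y z : 'I_(n i0)) : sf y = sf z -> y = z.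
Proof.
move=> e; apply/val_inj.
have [h1 _] := sf_spec (ltn_ord y); have [h2 _] := sf_spec (ltn_ord z).
by have := f_equal (fun b : midx n => val (b i0)) e; rewrite /= h1 h2.
Qed.

Lemma sf_i0 (z : 'I_(n i0)) : sf z i0 = z.
Proof. by apply/val_inj; have [-> _] := sf_spec (ltn_ord z). Qed.

Lemma sf_iota (z : 'I_(n i0)) : iota_lex t (sf z) = z.
Proof. by have [_ ->] := sf_spec (ltn_ord z). Qed.

Lemma RI (F : midx n -> R) :
  \sum_(b : midx n) TT b * F b = \sum_(z : 'I_(n i0)) F (sf z).
Proof.
transitivity (\sum_(z : 'I_(n i0)) \sum_(b : midx n) (b == sf z)%:R * F b).
  2: by apply: eq_bigr => z _; rewrite sum_delta.
rewrite exchange_big /=; apply: eq_bigr => b _; rewrite -mulr_suml; congr (_ * _).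
rewrite Tt_eq.
case: (eqVneq (val (b i0)) (iota_lex t b)) => e.
  rewrite (bigD1 (b i0)) //= big1 ?addr0.
    have eb : sf (b i0) = b.
      have -> : (b i0 : nat) = iota_lex t b by exact: e.
      by rewrite -sf_uniq.
    by rewrite eb eqxx.
  move=> z hz; case: eqP => // eb; move: hz.
  by rewrite eb sf_i0 eqxx.
rewrite big1 // => z _; case: eqP => // eb; move: e.
by rewrite eb sf_i0 sf_iota eqxx.
Qed.

Lemma act_T (g : gltuple R n) a : act g TT a =
  \sum_(z : 'I_(n i0)) g i0 (a i0) z * \prod_(i < d | i != i0) g i (a i) (sf z i).
Proof.
rewrite /act.
under eq_bigr do rewrite mulrC.
rewrite RI; apply: eq_bigr => z _.
by rewrite (bigD1 i0) //= sf_i0.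
Qed.


Lemma inH_tr (h : gltuple R n) : inH t h -> inH t (fun i => (h i)^T).
Proof.
move=> [hG hA]; split; first by move=> i; rewrite unitmx_tr.
pose M : 'M[R]_(n i0) := \matrix_(y, z) \prod_(i < d | i != i0) h i (sf y i) (sf z i).
have e1 : h i0 *m M^T = 1%:M.
  apply/matrixP => x y; rewrite !mxE.
  pose a := upd (sf y) i0 x.
  have := hA a; rewrite act_T Tt_eq.
  have -> : iota_lex t a = y.
    rewrite -(sf_iota y); apply: iota_tails => i hi; by rewrite upd_other.
  rewrite upd_sameO => <-.
  apply: eq_bigr => z _; rewrite !mxE; congr (_ * _).
  by apply: eq_bigr => i hi; rewrite upd_other.
have e2 : (h i0)^T *m M = 1%:M.
  have := mulmx1C e1 => /(congr1 trmx); rewrite trmx_mul trmxK trmx1 //.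
move=> a; rewrite act_T Tt_eq.
pose y := Ordinal (iota_ltn a).
have ea : forall i, i != i0 -> a i = sf y i.
  by apply: iota_inj; rewrite sf_iota.
have -> : (val (a i0) == iota_lex t a)%:R = (1%:M : 'M[R]_(n i0)) (a i0) y.
  by rewrite mxE.
rewrite -e2 mxE; apply: eq_bigr => z _; rewrite !mxE; congr (_ * _).
by apply: eq_bigr => i hi; rewrite mxE ea.
Qed.


Lemma moreover_part (h Z : gltuple R n) : inH t h -> in_m t Z -> in_m t (glconj h Z).
Proof.
move=> hH hZ K hK.
rewrite gldot_conj; last by case: hH.
by apply: hZ; apply: conj_h => //; apply: inH_tr.
Qed.


Lemma T_upd_i0 (a : midx n) (c : 'I_(n i0)) :
  TT (upd a i0 c) = dl R c (iota_lex t a).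
Proof.
rewrite Tt_eq upd_sameO /dl; congr (_%:R); congr (nat_of_bool (_ == _)).
by apply: iota_tails => i hi; rewrite upd_other.
Qed.

Lemma upd_sf_eq (a : midx n) : upd (sf (Ordinal (iota_ltn a))) i0 (a i0) = a.
Proof.
apply/ffunP => i; case: (eqVneq i i0) => [->|hi]; first by rewrite upd_sameO.
rewrite upd_other //; symmetry; apply: iota_inj hi.
by rewrite sf_iota.
Qed.

Definition Pc (Z : gltuple R n) : Prop := forall i, i != i0 -> Z i = 0.

Lemma reductive_of_eq : reductive R n t.
Proof.
exists Pc; split.
- split.
  + by [].
  + by move=> Z Z' h1 h2 i hi; rewrite /gladd h1 // h2 // addr0.
  + by move=> c Z h i hi; rewrite /glscale h // scaler0.
- split.
  + move=> Z hP hZ; apply: functional_extensionality_dep => i.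
    case: (eqVneq i i0) => [->|hi]; last by rewrite hP.
    apply/matrixP => x y; rewrite /gl0 mxE.
    pose a := upd (sf y) i0 x.
    have := hZ a; rewrite DF (bigD1 i0) //=.
    rewrite [X in _ + X = _]big1 ?addr0; last first.
      by move=> j hj; rewrite hP // big1 // => c _; rewrite mxE mul0r.
    under eq_bigr do rewrite T_upd_i0.
    have -> : iota_lex t a = y.
      rewrite -(sf_iota y); apply: iota_tails => j hj; by rewrite upd_other.
    by rewrite sum_dl_r upd_sameO.
  + move=> Z.
    pose Rf (x y : nat) : R := let a := upd (sf y) i0 x in
      \sum_(i < d | i != i0) \sum_(c : 'I_(n i)) Z i (a i) c * TT (upd a i c).
    pose K : gltuple R n := fun l => if l == i0 then \matrix_(x < n l, y < n l) (- Rf x y)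
       else Z l.
    exists (fun l => Z l - K l), K; split; [|split].
    * by move=> i hi; rewrite /K (negbTE hi) subrr.
    * move=> a; rewrite DF (bigD1 i0) //=.
      under eq_bigr do rewrite T_upd_i0.
      rewrite /K eqxx.
      under eq_bigr do rewrite mxE.
      rewrite (_ : iota_lex t a = Ordinal (iota_ltn a)) //.
      rewrite sum_dl_r /Rf upd_sf_eq.
      rewrite [X in _ + X](eq_bigr (fun i => \sum_(c : 'I_(n i)) Z i (a i) c * TT (upd a i c))).
        by rewrite addNr.
      by move=> i hi; rewrite (negbTE hi).
    * by apply: functional_extensionality_dep => l; rewrite /gladd subrK.
- move=> h hH Z hP i hi; by rewrite /glconj hP // mulmx0 mul0mx.
Qed.

End Eq.
End Main.

Theorem mainTheorem10 (R : realType) (d : nat) (n t : 'I_d -> nat) :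
  (3 <= d)%N ->
  (forall i, (2 <= n i)%N) ->
  (forall i, (0 < t i)%N /\ (t i <= n i)%N) ->
  (forall i0 : 'I_d, val i0 = 0%N ->
     t i0 = (\prod_(j < d | (0 < val j)%N) t j)%N) ->
  (reductive R n t <-> (forall i, n i = t i)) /\
  ((forall i, n i = t i) ->
     forall h : gltuple R n, inH t h ->
     forall Z : gltuple R n, in_m t Z -> in_m t (glconj h Z)).
Proof.
move=> hd hn htn ht0.
have hd0 : (0 < d)%N by apply: leq_trans hd.
pose i0 : 'I_d := Ordinal hd0.
have hi0 : val i0 = 0%N by [].
have ht : forall i, (0 < t i)%N by move=> i; case: (htn i).
have htn' : forall i, (t i <= n i)%N by move=> i; case: (htn i).
have ht0' := ht0 i0 hi0.
split; [split|].
- move=> hr; case: (boolP [forall i, n i == t i]) => H.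
    by move=> i; move/forallP: H => /(_ i) /eqP.
  exfalso; move/forallPn: H => [k hk].
  have hlt : (t k < n k)%N by rewrite ltn_neqAle eq_sym hk htn'.
  exact: (@not_reductive R d n t i0 hi0 ht htn' ht0' k hlt hr).
- move=> hnt; exact: (@reductive_of_eq R d n t i0 hi0 ht htn' ht0' hnt).
- move=> hnt h hH Z hZ; exact: (@moreover_part R d n t i0 hi0 ht htn' ht0' hnt h Z hH hZ).
Qed.
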